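(* Let $\mathcal{X},\mathcal{Y}$ be finite. For a distribution $Q$ on $\mathcal{X}$ and a false channel $\tilde W$, the false mutual information $\tilde I(Q,\tilde W)$ is: (1) non-negative; (2) concave in $Q$ (for fixed $\tilde W$); (3) convex in $\tilde W$ (for fixed $Q$); (4) bounded above by $\sigma\log|\mathcal{X}|$, where $\sigma=\max_x\sum_y\tilde W(y|x)$.
   Context: A false channel (false conditional probability) is any non-negative function $\tilde W(y|x)$ on $\mathcal{X}\times\mathcal{Y}$ (not necessarily summing to $1$ over $y$). The false mutual information is $$\tilde I(Q,\tilde W)=\sum_{x,y}Q(x)\tilde W(y|x)\log\frac{\tilde W(y|x)}{\sum_{x'}Q(x')\tilde W(y|x')},$$ where terms with $Q(x)\tilde W(y|x)=0$ are taken to be $0$ (convention $0\log0=0$). *)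

(* Defs.v *)
From Stdlib Require Export Reals.
Open Scope R_scope.

(* Finite alphabets X = {0,...,n-1}, Y = {0,...,m-1}. *)

Fixpoint fsum (n : nat) (f : nat -> R) : R :=
  match n with
  | O => 0
  | S k => fsum k f + f k
  end.

(* fmax n f = max_{x < n} f x  (for n >= 1; 0 for n = 0) *)
Fixpoint fmax (n : nat) (f : nat -> R) : R :=
  match n with
  | O => 0
  | S k => match k with
           | O => f 0%nat
           | _ => Rmax (fmax k f) (f k)
           end
  end.

Definition is_distr (n : nat) (Q : nat -> R) : Prop :=
  (forall x, (x < n)%nat -> 0 <= Q x) /\ fsum n Q = 1.

(* W is a false channel: W x y = W~(y|x) >= 0 on X x Y *)
Definition false_channel (n m : nat) (W : nat -> nat -> R) : Prop :=
  forall x y, (x < n)%nat -> (y < m)%nat -> 0 <= W x y.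

Definition outp (n : nat) (Q : nat -> R) (W : nat -> nat -> R) (y : nat) : R :=
  fsum n (fun x' => Q x' * W x' y).

(* false mutual information, with the convention 0 log 0 = 0:
   terms with Q(x) W~(y|x) = 0 are 0. *)
Definition false_MI (n m : nat) (Q : nat -> R) (W : nat -> nat -> R) : R :=
  fsum n (fun x => fsum m (fun y =>
    if Req_EM_T (Q x * W x y) 0 then 0
    else Q x * W x y * ln (W x y / outp n Q W y))).

(* Main.v *)
Require Import Defs.
From Stdlib Require Import Reals Lra Lia Psatz.
Open Scope R_scope.

Lemma ln_le_m1 t : 0 < t -> ln t <= t - 1.
Proof. intro Ht. pose proof (exp_ineq1_le (ln t)). rewrite exp_ln in H; lra. Qed.

Lemma ln_div' x y : 0 < x -> 0 < y -> ln (x / y) = ln x - ln y.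
Proof. intros. unfold Rdiv. rewrite ln_mult, ln_Rinv; try lra. apply Rinv_0_lt_compat; lra. Qed.

Lemma ln_le' x y : 0 < x -> x <= y -> ln x <= ln y.
Proof. intros Hx [H|H]. left; apply ln_increasing; lra. subst; lra. Qed.

Lemma K a b r : 0 <= a -> 0 <= b -> (0 < a -> 0 < b) -> 0 < r ->
  a * (1 + ln r) - r * b <= a * ln (a / b).
Proof.
  intros Ha Hb Hab Hr. destruct (Req_dec a 0) as [->|Ha0].
  - rewrite !Rmult_0_l. nra.
  - assert (0 < a) by lra. assert (0 < b) by auto.
    assert (Hl := ln_le_m1 (r * b / a)).
    assert (0 < r * b / a) by (apply Rdiv_lt_0_compat; nra).
    specialize (Hl H1).
    rewrite ln_div' in Hl by nra. rewrite ln_mult in Hl by lra.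
    rewrite ln_div' by lra.
    assert (a * (r * b / a) = r * b) by (field; lra).
    nra.
Qed.

Lemma Tconv w1 w2 p1 p2 l : 0 <= w1 -> 0 <= w2 -> 0 <= p1 -> 0 <= p2 ->
  (0 < w1 -> 0 < p1) -> (0 < w2 -> 0 < p2) -> 0 <= l <= 1 ->
  (l * w1 + (1 - l) * w2) * ln ((l * w1 + (1 - l) * w2) / (l * p1 + (1 - l) * p2))
  <= l * (w1 * ln (w1 / p1)) + (1 - l) * (w2 * ln (w2 / p2)).
Proof.
  intros H1 H2 H3 H4 H5 H6 Hl.
  set (w := l * w1 + (1 - l) * w2). set (p := l * p1 + (1 - l) * p2).
  assert (A1 : 0 <= l * w1) by nra. assert (A2 : 0 <= (1 - l) * w2) by nra.
  destruct (Req_dec w 0) as [Hw|Hw].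
  - assert (B1 : l * w1 = 0) by (unfold w in Hw; lra).
    assert (B2 : (1 - l) * w2 = 0) by (unfold w in Hw; lra).
    rewrite Hw, Rmult_0_l. rewrite <- !Rmult_assoc, B1, B2. lra.
  - assert (Hw' : 0 < w) by (unfold w in *; lra).
    assert (Hp : 0 < p).
    { unfold w, p in *. destruct (Rlt_dec 0 (l * w1)) as [C|C].
      + assert (0 < l) by nra. assert (0 < w1) by nra. specialize (H5 H0). nra.
      + assert (0 < (1 - l) * w2) by lra. assert (0 < 1 - l) by nra. assert (0 < w2) by nra.
        specialize (H6 H7). nra. }
    assert (Hr : 0 < w / p) by (apply Rdiv_lt_0_compat; lra).
    pose proof (K w1 p1 (w / p) H1 H3 H5 Hr).
    pose proof (K w2 p2 (w / p) H2 H4 H6 Hr).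
    assert (E : w * (1 + ln (w / p)) - w / p * p = w * ln (w / p)).
    { assert (w / p * p = w) by (field; lra). lra. }
    assert (l * (w1 * (1 + ln (w / p)) - w / p * p1) + (1 - l) * (w2 * (1 + ln (w / p)) - w / p * p2)
      = w * (1 + ln (w / p)) - w / p * p) by (unfold w, p; ring).
    nra.
Qed.

Lemma fsum_ext n f g : (forall x, (x < n)%nat -> f x = g x) -> fsum n f = fsum n g.
Proof. induction n; simpl; intros; auto. rewrite IHn, H; auto. Qed.

Lemma fsum_le n f g : (forall x, (x < n)%nat -> f x <= g x) -> fsum n f <= fsum n g.
Proof. induction n; simpl; intros. lra. assert (fsum n f <= fsum n g) by auto.
  specialize (H n (Nat.lt_succ_diag_r n)). lra. Qed.

Lemma fsum_lin n a b f g : fsum n (fun x => a * f x + b * g x) = a * fsum n f + b * fsum n g.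
Proof. induction n; simpl. ring. rewrite IHn; ring. Qed.

Lemma fsum_scal n c f : fsum n (fun x => c * f x) = c * fsum n f.
Proof. induction n; simpl. ring. rewrite IHn; ring. Qed.

Lemma fsum_minus n f g : fsum n (fun x => f x - g x) = fsum n f - fsum n g.
Proof. induction n; simpl. ring. rewrite IHn; ring. Qed.

Lemma fsum_const n c : fsum n (fun _ => c) = INR n * c.
Proof. induction n; simpl fsum. simpl; ring. rewrite IHn, S_INR; ring. Qed.

Lemma fsum_plus n f g : fsum n (fun x => f x + g x) = fsum n f + fsum n g.
Proof. induction n; simpl. ring. rewrite IHn; ring. Qed.

Lemma fsum_swap n m f : fsum n (fun x => fsum m (fun y => f x y)) = fsum m (fun y => fsum n (fun x => f x y)).
Proof. induction n; simpl. induction m; simpl; auto. rewrite <- IHm; ring.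
  rewrite IHn, fsum_plus. reflexivity. Qed.

Lemma fsum_nonneg n f : (forall x, (x < n)%nat -> 0 <= f x) -> 0 <= fsum n f.
Proof. intros. replace 0 with (fsum n (fun _ => 0)). apply fsum_le; auto.
  rewrite fsum_const; ring. Qed.

Lemma fsum_term n f x : (forall x, (x < n)%nat -> 0 <= f x) -> (x < n)%nat -> f x <= fsum n f.
Proof. induction n; simpl; intros. lia.
  assert (0 <= fsum n f) by (apply fsum_nonneg; auto).
  destruct (Nat.eq_dec x n). subst; lra.
  assert (f x <= fsum n f) by (apply IHn; auto; lia).
  assert (0 <= f n) by auto. lra. Qed.

Lemma fmax_ge n f x : (x < n)%nat -> f x <= fmax n f.
Proof. induction n; intros. lia. destruct n. simpl. replace x with 0%nat by lia; lra.
  change (fmax (S (S n)) f) with (Rmax (fmax (S n) f) (f (S n))).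
  destruct (Nat.eq_dec x (S n)). subst; apply Rmax_r.
  eapply Rle_trans; [apply IHn; lia| apply Rmax_l]. Qed.

Lemma FMI_simpl n m Q W : false_MI n m Q W =
  fsum n (fun x => fsum m (fun y => Q x * W x y * ln (W x y / outp n Q W y))).
Proof. unfold false_MI. apply fsum_ext; intros. apply fsum_ext; intros.
  destruct (Req_EM_T (Q x * W x x0) 0) as [e|e]; auto. rewrite e; ring. Qed.

Lemma outp_ge n Q W x y : (forall x, (x < n)%nat -> 0 <= Q x) ->
  (forall x, (x < n)%nat -> 0 <= W x y) -> (x < n)%nat -> Q x * W x y <= outp n Q W y.
Proof. intros. unfold outp. apply (fsum_term n (fun x' => Q x' * W x' y)); auto.
  intros; apply Rmult_le_pos; auto. Qed.

Lemma outp_nn n Q W y : (forall x, (x < n)%nat -> 0 <= Q x) ->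
  (forall x, (x < n)%nat -> 0 <= W x y) -> 0 <= outp n Q W y.
Proof. intros. unfold outp. apply fsum_nonneg. intros; apply Rmult_le_pos; auto. Qed.

Lemma Decomp n m Q W : (forall x, (x < n)%nat -> 0 <= Q x) -> false_channel n m W ->
  false_MI n m Q W = fsum n (fun x => Q x * fsum m (fun y => W x y * ln (W x y)))
    - fsum m (fun y => outp n Q W y * ln (outp n Q W y)).
Proof.
  intros HQ HW. rewrite FMI_simpl.
  transitivity (fsum n (fun x => fsum m (fun y => Q x * W x y * ln (W x y)
        - Q x * W x y * ln (outp n Q W y)))).
  { apply fsum_ext; intros x Hx; apply fsum_ext; intros y Hy.
    destruct (Req_dec (Q x * W x y) 0) as [e|e].
    - rewrite e; ring.
    - assert (0 <= Q x) by auto. assert (0 <= W x y) by auto.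
      assert (0 < Q x) by (destruct (Req_dec (Q x) 0) as [h|h]; [rewrite h in e; lra | lra]).
      assert (0 < W x y) by (destruct (Req_dec (W x y) 0) as [h|h]; [rewrite h in e; lra | lra]).
      assert (Q x * W x y <= outp n Q W y) by (apply outp_ge; auto).
      assert (0 < Q x * W x y) by nra.
      rewrite ln_div' by lra. ring. }
  rewrite (fsum_ext n _ (fun x => fsum m (fun y => Q x * W x y * ln (W x y))
     - fsum m (fun y => Q x * W x y * ln (outp n Q W y)))).
  2:{ intros; apply fsum_minus. }
  rewrite fsum_minus. f_equal.
  - apply fsum_ext; intros. rewrite <- fsum_scal. apply fsum_ext; intros; ring.
  - rewrite fsum_swap. apply fsum_ext; intros. unfold outp.
    rewrite Rmult_comm, <- fsum_scal. apply fsum_ext; intros; ring.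
Qed.

Lemma Q_le1 n Q x : is_distr n Q -> (x < n)%nat -> Q x <= 1.
Proof. intros [H1 H2] Hx. rewrite <- H2. apply fsum_term; auto. Qed.

Lemma pos_of n m Q W x y : (forall x, (x < n)%nat -> 0 <= Q x) -> false_channel n m W ->
  (x < n)%nat -> (y < m)%nat -> 0 < Q x -> 0 < W x y -> 0 < outp n Q W y.
Proof. intros. assert (Q x * W x y <= outp n Q W y) by (apply outp_ge; auto).
  nra. Qed.

Lemma part1 n m Q W : is_distr n Q -> false_channel n m W -> 0 <= false_MI n m Q W.
Proof.
  intros [HQ HS] HW. rewrite FMI_simpl.
  apply Rle_trans with (fsum n (fun x => fsum m (fun y => Q x * W x y - Q x * outp n Q W y))).
  - rewrite fsum_swap. apply fsum_nonneg. intros y Hy. rewrite fsum_minus.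
    rewrite (fsum_ext n (fun x => Q x * outp n Q W y) (fun x => outp n Q W y * Q x)) by (intros; ring).
    rewrite fsum_scal, HS. unfold outp; lra.
  - apply fsum_le; intros x Hx; apply fsum_le; intros y Hy.
    assert (0 <= Q x) by auto. assert (0 <= W x y) by auto.
    assert (0 <= outp n Q W y) by (apply outp_nn; auto).
    destruct (Req_dec (Q x) 0) as [h|h]. rewrite h; lra.
    assert (0 < Q x) by lra.
    pose proof (K (W x y) (outp n Q W y) 1 H0 H1) as HK.
    rewrite ln_1 in HK.
    assert (0 < W x y -> 0 < outp n Q W y) by (intros; eapply pos_of; eauto).
    specialize (HK H3 Rlt_0_1).
    rewrite Rmult_assoc, <- Rmult_minus_distr_l. apply Rmult_le_compat_l; lra.
Qed.

Lemma part4 n m Q W : is_distr n Q -> false_channel n m W ->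
  false_MI n m Q W <= fmax n (fun x => fsum m (fun y => W x y)) * ln (INR n).
Proof.
  intros [HQ HS] HW. set (s := fmax n (fun x => fsum m (fun y => W x y))).
  assert (Hn : (1 <= n)%nat) by (destruct n; [simpl in HS; lra | lia]).
  assert (Hs0 : 0 <= s).
  { apply Rle_trans with (fsum m (fun y => W 0%nat y)).
    apply fsum_nonneg; intros; apply HW; lia. apply (fmax_ge n (fun x => fsum m (fun y => W x y))). lia. }
  rewrite FMI_simpl.
  apply Rle_trans with (fsum n (fun x => (- (Q x * ln (Q x))) * fsum m (fun y => W x y))).
  { apply fsum_le; intros x Hx. rewrite <- fsum_scal. apply fsum_le; intros y Hy.
    assert (0 <= Q x) by auto. assert (0 <= W x y) by auto.
    assert (Q x <= 1) by (apply (Q_le1 n); [split|]; auto).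
    destruct (Req_dec (Q x) 0) as [h|h]. rewrite h, !Rmult_0_l; lra.
    assert (0 < Q x) by lra.
    assert (ln (Q x) <= 0) by (rewrite <- ln_1; apply ln_le'; lra).
    destruct (Req_dec (W x y) 0) as [h'|h']. rewrite h'. nra.
    assert (0 < W x y) by lra.
    assert (Q x * W x y <= outp n Q W y) by (apply outp_ge; auto).
    assert (0 < Q x * W x y) by nra.
    rewrite ln_div' by lra.
    assert (ln (Q x * W x y) <= ln (outp n Q W y)) by (apply ln_le'; lra).
    rewrite ln_mult in H7 by lra.
    nra. }
  apply Rle_trans with (fsum n (fun x => s * (- (Q x * ln (Q x))))).
  { apply fsum_le; intros x Hx.
    assert (0 <= Q x) by auto. assert (Q x <= 1) by (apply (Q_le1 n); [split|]; auto).
    assert (0 <= - (Q x * ln (Q x))).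
    { destruct (Req_dec (Q x) 0) as [h|h]. rewrite h; lra.
      assert (ln (Q x) <= 0) by (rewrite <- ln_1; apply ln_le'; lra). nra. }
    assert (fsum m (fun y => W x y) <= s) by (apply (fmax_ge n (fun x => fsum m (fun y => W x y))); auto).
    nra. }
  rewrite fsum_scal. apply Rmult_le_compat_l; auto.
  assert (HN : 0 < INR n) by (apply lt_0_INR; lia).
  apply Rle_trans with (fsum n (fun x => ln (INR n) * Q x + (-1) * Q x + / INR n * 1)).
  { apply fsum_le; intros x Hx. assert (0 <= Q x) by auto.
    assert (0 <= / INR n) by (left; apply Rinv_0_lt_compat; lra).
    pose proof (K (Q x) (/ INR n) 1 H H0 (fun _ => Rinv_0_lt_compat _ HN) Rlt_0_1) as HK.
    rewrite ln_1 in HK.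
    destruct (Req_dec (Q x) 0) as [h|h]. rewrite h, Rmult_0_l. nra.
    rewrite ln_div', ln_Rinv in HK by (try apply Rinv_0_lt_compat; lra). nra. }
  rewrite fsum_plus, fsum_lin, fsum_const, HS. right. field. lra.
Qed.

Lemma phi_conv a b l : 0 <= a -> 0 <= b -> 0 <= l <= 1 ->
  (l * a + (1 - l) * b) * ln (l * a + (1 - l) * b) <= l * (a * ln a) + (1 - l) * (b * ln b).
Proof. intros. pose proof (Tconv a b 1 1 l H H0 ltac:(lra) ltac:(lra) ltac:(lra) ltac:(lra) H1).
  replace (l * 1 + (1 - l) * 1) with 1 in H2 by ring.
  unfold Rdiv in H2. rewrite !Rinv_1, !Rmult_1_r in H2. exact H2. Qed.

Lemma part2 n m W Q1 Q2 l : false_channel n m W -> is_distr n Q1 -> is_distr n Q2 ->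
  0 <= l <= 1 ->
  l * false_MI n m Q1 W + (1 - l) * false_MI n m Q2 W
    <= false_MI n m (fun x => l * Q1 x + (1 - l) * Q2 x) W.
Proof.
  intros HW [H1 _] [H2 _] Hl.
  assert (Hc : forall x, (x < n)%nat -> 0 <= l * Q1 x + (1 - l) * Q2 x).
  { intros. specialize (H1 x H). specialize (H2 x H). nra. }
  rewrite !Decomp; auto.
  set (c := fun x => fsum m (fun y => W x y * ln (W x y))).
  rewrite (fsum_ext n (fun x => (l * Q1 x + (1 - l) * Q2 x) * fsum m (fun y => W x y * ln (W x y)))
     (fun x => l * (Q1 x * c x) + (1 - l) * (Q2 x * c x))) by (intros; unfold c; ring).
  rewrite fsum_lin.
  assert (forall y, outp n (fun x => l * Q1 x + (1 - l) * Q2 x) W y = l * outp n Q1 W y + (1 - l) * outp n Q2 W y).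
  { intros. unfold outp. rewrite <- fsum_lin. apply fsum_ext; intros; ring. }
  assert (fsum m (fun y => outp n (fun x => l * Q1 x + (1 - l) * Q2 x) W y *
            ln (outp n (fun x => l * Q1 x + (1 - l) * Q2 x) W y))
   <= l * fsum m (fun y => outp n Q1 W y * ln (outp n Q1 W y))
      + (1 - l) * fsum m (fun y => outp n Q2 W y * ln (outp n Q2 W y))).
  { rewrite <- fsum_lin. apply fsum_le; intros y Hy. rewrite H.
    apply phi_conv; auto; apply outp_nn; auto. }
  unfold c in *. lra.
Qed.

Lemma part3 n m Q W1 W2 l : is_distr n Q -> false_channel n m W1 -> false_channel n m W2 ->
  0 <= l <= 1 ->
  false_MI n m Q (fun x y => l * W1 x y + (1 - l) * W2 x y)
    <= l * false_MI n m Q W1 + (1 - l) * false_MI n m Q W2.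
Proof.
  intros [HQ _] HW1 HW2 Hl. rewrite !FMI_simpl.
  rewrite <- fsum_lin.
  rewrite (fsum_ext n (fun x => l * fsum m (fun y => Q x * W1 x y * ln (W1 x y / outp n Q W1 y)) +
     (1 - l) * fsum m (fun y => Q x * W2 x y * ln (W2 x y / outp n Q W2 y)))
     (fun x => fsum m (fun y => l * (Q x * W1 x y * ln (W1 x y / outp n Q W1 y)) +
     (1 - l) * (Q x * W2 x y * ln (W2 x y / outp n Q W2 y)))))
    by (intros; symmetry; apply fsum_lin).
  apply fsum_le; intros x Hx; apply fsum_le; intros y Hy.
  assert (E : outp n Q (fun x y => l * W1 x y + (1 - l) * W2 x y) y = l * outp n Q W1 y + (1 - l) * outp n Q W2 y).
  { unfold outp. rewrite <- fsum_lin. apply fsum_ext; intros; ring. }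
  rewrite E.
  assert (0 <= Q x) by auto.
  destruct (Req_dec (Q x) 0) as [h|h]. rewrite h; repeat rewrite Rmult_0_l; lra.
  assert (0 < Q x) by lra.
  assert (0 <= W1 x y) by auto. assert (0 <= W2 x y) by auto.
  pose proof (Tconv (W1 x y) (W2 x y) (outp n Q W1 y) (outp n Q W2 y) l H1 H2
     ltac:(apply outp_nn; auto) ltac:(apply outp_nn; auto)
     ltac:(intros; eapply pos_of; eauto) ltac:(intros; eapply pos_of; eauto) Hl) as T.
  rewrite !(Rmult_assoc (Q x)).
  replace (l * (Q x * (W1 x y * ln (W1 x y / outp n Q W1 y))) +
    (1 - l) * (Q x * (W2 x y * ln (W2 x y / outp n Q W2 y)))) with
    (Q x * (l * (W1 x y * ln (W1 x y / outp n Q W1 y)) +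
    (1 - l) * (W2 x y * ln (W2 x y / outp n Q W2 y)))) by ring.
  apply Rmult_le_compat_l; lra.
Qed.
Theorem lemma6 (n m : nat) :
  (* (1) non-negativity *)
  (forall (Q : nat -> R) (W : nat -> nat -> R),
     is_distr n Q -> false_channel n m W -> 0 <= false_MI n m Q W) /\
  (* (2) concavity in Q for fixed W *)
  (forall (W : nat -> nat -> R) (Q1 Q2 : nat -> R) (lam : R),
     false_channel n m W -> is_distr n Q1 -> is_distr n Q2 ->
     0 <= lam <= 1 ->
     lam * false_MI n m Q1 W + (1 - lam) * false_MI n m Q2 W
       <= false_MI n m (fun x => lam * Q1 x + (1 - lam) * Q2 x) W) /\
  (* (3) convexity in W for fixed Q *)
  (forall (Q : nat -> R) (W1 W2 : nat -> nat -> R) (lam : R),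
     is_distr n Q -> false_channel n m W1 -> false_channel n m W2 ->
     0 <= lam <= 1 ->
     false_MI n m Q (fun x y => lam * W1 x y + (1 - lam) * W2 x y)
       <= lam * false_MI n m Q W1 + (1 - lam) * false_MI n m Q W2) /\
  (* (4) upper bound sigma * log |X|, sigma = max_x sum_y W(y|x) *)
  (forall (Q : nat -> R) (W : nat -> nat -> R),
     is_distr n Q -> false_channel n m W ->
     false_MI n m Q W <= fmax n (fun x => fsum m (fun y => W x y)) * ln (INR n)).
Proof.
  split; [|split; [|split]].
  - intros; eapply part1; eauto.
  - intros; apply part2; auto.
  - intros; apply part3; auto.
  - intros; apply part4; auto.
Qed.
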